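(* Let $H\Gamma=(C,\{\mathcal W,\mathcal X,\mathcal Y,\mathcal Z\},G_{zx},G_{wy})$ be a Lagrangian hypercube diagram. Then $H\Gamma$ determines an immersed torus $i:T=S^1\times S^1\to\mathbb{R}^4$ which is Lagrangian with respect to $\omega=dw\wedge dy+dz\wedge dx$; moreover the loops $\gamma_{zx}=S^1\times\{1\}$ and $\gamma_{wy}=\{1\}\times S^1$ map under $i$ to curves projecting to the Lagrangian grid diagrams $G_{zx}$ and $G_{wy}$ respectively.
   Context: Grid conventions. In a plane with coordinates $(a,b)$ (below $(a,b)=(w,y)$ or $(a,b)=(z,x)$), an immersed grid diagram of size $n$ is an $n\times n$ grid of unit cells in $[0,n]^2$ with two kinds of markings at centers of cells, each row and each column containing exactly one marking of each kind; joining each marking of the first kind to the marking of the second kind in its row by an $a$-parallel segment, and each marking of the second kind to the marking of the first kind in its column by a $b$-parallel segment, gives an oriented connected closed piecewise-linear curve, with no crossing information, viewed as an immersion $\gamma:\mathbb{R}/2\pi\mathbb{Z}\to\mathbb{R}^2$, $\theta\mapsto(a(\theta),b(\theta))$. It is a Lagrangian grid diagram if (1) $\int_0^{2\pi}b\,a'\,d\theta=0$ and (2) $\int_{\theta_0}^{\theta_1}b\,a'\,d\theta\neq0$ whenever $\theta_0\neq\theta_1$ and $\gamma(\theta_0)=\gamma(\theta_1)$. For a crossing $c=\gamma(\theta_0)=\gamma(\theta_1)$ put $|\Delta t(c)|=|\int_{\theta_0}^{\theta_1}b\,a'\,d\theta|$. Hypercube diagrams. Let $C=[0,n]^4$ with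 coordinates $(w,x,y,z)$. A flat is a product in which two coordinates range over $[0,n]$ and the other two over unit intervals $[k,k+1]$, named by its two full coordinates; a cube is a product in which three coordinates range over $[0,n]$ and one over a unit interval. Markings are points with coordinates in $\mathbb{Z}+\frac12$ labelled $W,X,Y,Z$. Marking conditions: each cube contains exactly one marking of each label; each cube contains exactly two flats containing exactly three markings; in each such flat the three markings form a right angle with rays parallel to coordinate axes; its vertex is $W$ iff the flat is a $zw$-flat, $X$ iff a $wx$-flat, $Y$ iff an $xy$-flat, $Z$ iff a $yz$-flat. Join each $W$ to an $X$ by a $w$-parallel segment, each $X$ to a $Y$ by an $x$-parallel segment, each $Y$ to a $Z$ by a $y$-parallel segment and each $Z$ to a $W$ by a $z$-parallel segment; the projections of this curve to the $(w,y)$- and $(z,x)$-planes are immersed grid diagrams $G_{wy}$ ($(a,b)=(w,y)$) and $G_{zx}$ ($(a,b)=(z,x)$). $H\Gamma$ is a Lagrangian hypercube diagram if the marking conditions hold, $G_{wy},G_{zx}$ are Lagrangian grid diagrams, and $|\Delta t(c)|\neq|\Delta t(c')|$ for all crossings $c$ of $G_{zx}$ and $c'$ of $G_{wy}$. The torus determined by $H\Gamma$ is obtained by placing a copy of $G_{zx}$ in each $zx$-flat whose $(w,y)$-cell contains a marking of $G_{wy}$ and joining these copies by the tubes swept out by translating them parallel to the $w$- and $y$-axes along the edges of $G_{wy}$; i.e. with $G_{zx}$ parametrized by $s\mapsto(z(s),x(s))$ and $G_{wy}$ by $u\mapsto(w(u),y(u))$, $i(s,u)=(w(u),x(s),y(u),z(s))$.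 *)

(* Defs.v *)
From Stdlib Require Import Reals ZArith.
From Coquelicot Require Import Coquelicot.
From mathcomp Require Import all_boot.

Set Implicit Arguments.
Unset Strict Implicit.
Unset Printing Implicit Defensive.
Local Open Scope nat_scope.

(* With these conventions, a marking of label l is joined to the next *)
(* marking (label l+1 mod 4) by a segment parallel to coordinate l.   *)
Definition c_w : 'I_4 := @Ordinal 4 0 erefl.
Definition c_x : 'I_4 := @Ordinal 4 1 erefl.
Definition c_y : 'I_4 := @Ordinal 4 2 erefl.
Definition c_z : 'I_4 := @Ordinal 4 3 erefl.
Definition l_W : 'I_4 := c_w.
Definition l_X : 'I_4 := c_x.
Definition l_Y : 'I_4 := c_y.
Definition l_Z : 'I_4 := c_z.

(* A unit 4-cell of C = [0,n]^4, [k_w,k_w+1] x ... x [k_z,k_z+1];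
   a marking sits at the center of such a cell. *)
Definition pt (n : nat) := {ffun 'I_4 -> 'I_n}.

Definition label_of (j : nat) : 'I_4 := inord (j %% 4).

Definition agree_except n (c : 'I_4) (p q : pt n) : Prop :=
  forall d : 'I_4, d != c -> p d = q d.

Definition differs_only n (c : 'I_4) (p q : pt n) : Prop :=
  agree_except c p q /\ p c != q c.

(* the flat with full coordinates a,b passing through the cell p,
   viewed as its set of unit cells *)
Definition flat_set n (a b : 'I_4) (p : pt n) : {set pt n} :=
  [set q : pt n | [forall d : 'I_4, ((d != a) && (d != b)) ==> (q d == p d)]].

(* the flats contained in the cube {coordinate c in [k,k+1]}; a flat is
   recorded together with its name (a,b), a < b, of full coordinates *)
Definition flats_in_cube n (c : 'I_4) (k : 'I_n) :
  {set ('I_4 * 'I_4) * {set pt n}} :=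
  [set ((x.1.1, x.1.2), flat_set x.1.1 x.1.2 x.2)
     | x : ('I_4 * 'I_4) * pt n
     & [&& (x.1.1 < x.1.2)%N, x.1.1 != c, x.1.2 != c & x.2 c == k]].

Definition marking_count n (M : 'I_4 -> {set pt n}) (F : {set pt n}) : nat :=
  #|[set lq : 'I_4 * pt n | (lq.2 \in M lq.1) && (lq.2 \in F)]|.

Definition vertex_rule (l a b : 'I_4) : Prop :=
  ((l == l_W) = ((a, b) == (c_w, c_z))) /\
  ((l == l_X) = ((a, b) == (c_w, c_x))) /\
  ((l == l_Y) = ((a, b) == (c_x, c_y))) /\
  ((l == l_Z) = ((a, b) == (c_y, c_z))).

(* the (three) markings of the flat fl form a right angle with rays
   parallel to the coordinate axes, with the prescribed vertex label *)
Definition right_angle n (M : 'I_4 -> {set pt n})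
    (fl : ('I_4 * 'I_4) * {set pt n}) : Prop :=
  let a := fl.1.1 in let b := fl.1.2 in let F := fl.2 in
  exists (l0 : 'I_4) (v : pt n) (l1 : 'I_4) (p1 : pt n) (l2 : 'I_4) (p2 : pt n),
    v \in M l0 /\ p1 \in M l1 /\ p2 \in M l2 /\
    v \in F /\ p1 \in F /\ p2 \in F /\
    differs_only a v p1 /\ differs_only b v p2 /\
    vertex_rule l0 a b.

Definition marking_conditions n (M : 'I_4 -> {set pt n}) : Prop :=
  (* each cube contains exactly one marking of each label *)
  (forall (l c : 'I_4) (k : 'I_n), #|[set p in M l | p c == k]| = 1) /\
  (* each cube contains exactly two flats containing exactly three markings *)
  (forall (c : 'I_4) (k : 'I_n),
      #|[set fl in flats_in_cube c k | marking_count M fl.2 == 3]| = 2) /\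
  (forall (c : 'I_4) (k : 'I_n) fl, fl \in flats_in_cube c k ->
      marking_count M fl.2 = 3 -> right_angle M fl).

(* cyc enumerates (periodically, period 4n) the oriented closed curve
   obtained by joining each W to an X by a w-parallel segment, each X to a
   Y by an x-parallel segment, each Y to a Z by a y-parallel segment and
   each Z to a W by a z-parallel segment; it passes through every marking,
   i.e. this curve is connected. *)
Definition joining_curve n (M : 'I_4 -> {set pt n}) (cyc : nat -> pt n) : Prop :=
  (forall j, cyc (j + 4 * n)%N = cyc j) /\
  (forall j, cyc j \in M (label_of j)) /\
  (forall (l : 'I_4) (p : pt n), p \in M l ->
      exists j, (j %% 4 = l)%N /\ cyc j = p) /\
  (forall j, agree_except (label_of j) (cyc j) (cyc j.+1)).

(* Grid diagrams in an (a,b)-plane. A grid diagram of size n is given  *)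
(* by the periodic (period 2n) sequence P of the cells of its markings *)
(* in the order in which the oriented curve visits them: P (2j) are    *)
(* the markings of the first kind, P (2j+1) those of the second kind;  *)
(* cells are pairs (a-index, b-index).                                 *)
Definition is_immersed_grid n (P : nat -> 'I_n * 'I_n) : Prop :=
  (forall i, P (i + 2 * n)%N = P i) /\
  (forall k : 'I_n,
      #|[set j : 'I_n | (P (2 * j)%N).2 == k]| = 1 /\
      #|[set j : 'I_n | (P (2 * j).+1).2 == k]| = 1 /\
      #|[set j : 'I_n | (P (2 * j)%N).1 == k]| = 1 /\
      #|[set j : 'I_n | (P (2 * j).+1).1 == k]| = 1) /\
  (* first kind -> second kind in its row (a-parallel segment),
     second kind -> first kind in its column (b-parallel segment) *)
  (forall j, (P (2 * j)%N).2 = (P (2 * j).+1).2 /\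
             (P (2 * j).+1).1 = (P (2 * j).+2).1) /\
  (* the segments are nondegenerate, so the curve is an immersion *)
  (forall j, P j <> P j.+1).

Definition wy_vert n (cyc : nat -> pt n) (i : nat) : 'I_n * 'I_n :=
  let p := cyc (if odd i then (4 * i./2).+1 else 4 * i./2)%N in (p c_w, p c_y).
Definition zx_vert n (cyc : nat -> pt n) (i : nat) : 'I_n * 'I_n :=
  let p := cyc (if odd i then 4 * i./2 + 4 else 4 * i./2 + 3)%N in (p c_z, p c_x).

Local Open Scope R_scope.

Definition center n (k : 'I_n) : R := INR k + / 2.

(* the oriented closed PL curve gamma : R/2piZ -> R^2 of a grid diagram:
   constant speed, the i-th segment (from P i to P (i+1)) is traversed
   for theta in [2 pi i / (2n), 2 pi (i+1) / (2n)]. *)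
Definition grid_param n (P : nat -> 'I_n * 'I_n) (th : R) : R * R :=
  let m := (2 * n)%N in
  let t := th * INR m / (2 * PI) in
  let k := Int_part t in
  let f := t - IZR k in
  let i := Z.to_nat (Z.modulo k (Z.of_nat m)) in
  ((1 - f) * center (P i).1 + f * center (P i.+1).1,
   (1 - f) * center (P i).2 + f * center (P i.+1).2).

Definition delta_t n (P : nat -> 'I_n * 'I_n) (th0 th1 : R) : R :=
  RInt (fun th => snd (grid_param P th) *
                  Derive (fun t => fst (grid_param P t)) th) th0 th1.

Definition crossing_params n (P : nat -> 'I_n * 'I_n) (th0 th1 : R) : Prop :=
  0 <= th0 < 2 * PI /\ 0 <= th1 < 2 * PI /\ th0 <> th1 /\
  grid_param P th0 = grid_param P th1.

Definition is_lagrangian_grid n (P : nat -> 'I_n * 'I_n) : Prop :=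
  is_immersed_grid P /\
  delta_t P 0 (2 * PI) = 0 /\
  (forall th0 th1, crossing_params P th0 th1 -> delta_t P th0 th1 <> 0).

(* Lagrangian hypercube diagram with markings M (M l = markings of label l)
   and hypercube curve cyc; G_zx = zx_vert cyc, G_wy = wy_vert cyc. *)
Definition lagrangian_hypercube n (M : 'I_4 -> {set pt n}) (cyc : nat -> pt n)
  : Prop :=
  marking_conditions M /\
  joining_curve M cyc /\
  is_lagrangian_grid (zx_vert cyc) /\
  is_lagrangian_grid (wy_vert cyc) /\
  (forall th0 th1 ph0 ph1,
      crossing_params (zx_vert cyc) th0 th1 ->
      crossing_params (wy_vert cyc) ph0 ph1 ->
      Rabs (delta_t (zx_vert cyc) th0 th1) <> Rabs (delta_t (wy_vert cyc) ph0 ph1)).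

(* The torus i(s,u) = (w(u), x(s), y(u), z(s)), with                  *)
(* gamma_zx(s) = (z(s),x(s)) and gamma_wy(u) = (w(u),y(u)).            *)
Definition torus_map n (cyc : nat -> pt n) (s u : R) (c : 'I_4) : R :=
  let zx := grid_param (zx_vert cyc) s in
  let wy := grid_param (wy_vert cyc) u in
  if c == c_w then fst wy else if c == c_x then snd zx
  else if c == c_y then snd wy else fst zx.

Definition omega (U V : 'I_4 -> R) : R :=
  U c_w * V c_y - U c_y * V c_w + U c_z * V c_x - U c_x * V c_z.

Definition d_s (i : R -> R -> 'I_4 -> R) (s u : R) (c : 'I_4) : R :=
  Derive (fun s' => i s' u c) s.
Definition d_u (i : R -> R -> 'I_4 -> R) (s u : R) (c : 'I_4) : R :=
  Derive (fun u' => i s u' c) u.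

Definition differentiable_at (i : R -> R -> 'I_4 -> R) (s u : R) : Prop :=
  forall c : 'I_4, ex_derive (fun s' => i s' u c) s /\ ex_derive (fun u' => i s u' c) u.

(* i : R^2 -> R^4 (2pi-periodic in both variables, i.e. a map
   S^1 x S^1 -> R^4) is a (piecewise-linear) immersed torus which is
   Lagrangian for omega: it is locally injective, and at every point
   where it is differentiable its differential has rank 2 and its
   image is an omega-isotropic (hence Lagrangian) plane. *)
Definition immersed_lagrangian_torus (i : R -> R -> 'I_4 -> R) : Prop :=
  (forall s u c, i (s + 2 * PI) u c = i s u c /\ i s (u + 2 * PI) c = i s u c) /\
  (forall s u, exists eps, 0 < eps /\
     forall s1 u1 s2 u2,
       Rabs (s1 - s) < eps -> Rabs (u1 - u) < eps ->
       Rabs (s2 - s) < eps -> Rabs (u2 - u) < eps ->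
       (forall c, i s1 u1 c = i s2 u2 c) -> s1 = s2 /\ u1 = u2) /\
  (forall s u, differentiable_at i s u ->
     forall a b : R, (forall c, a * d_s i s u c + b * d_u i s u c = 0) ->
       a = 0 /\ b = 0) /\
  (forall s u, differentiable_at i s u -> omega (d_s i s u) (d_u i s u) = 0).

(* Main.v *)
Require Import Defs.
From Stdlib Require Import Reals Lra Lia ZArith.
From Coquelicot Require Import Coquelicot.
From mathcomp Require Import all_boot zify.
Set Implicit Arguments.
Unset Strict Implicit.
Open Scope R_scope.

Lemma Ipart_bnd r : IZR (Int_part r) <= r < IZR (Int_part r) + 1.
Proof. have [h1 h2] := base_Int_part r. lra. Qed.

Lemma Ipart_eq r z : IZR z <= r < IZR z + 1 -> Int_part r = z.
Proof. move=> h. symmetry. apply: Int_part_spec. lra. Qed.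

Lemma center_inj n (a b : 'I_n) : center a = center b -> a = b.
Proof. rewrite /center => h. apply: ord_inj. apply: INR_eq. lra. Qed.

Lemma deriv_right (F : R -> R) x l s d : is_derive F x l -> 0 < d ->
  (forall h, 0 < h < d -> F (x + h) - F x = h * s) -> l = s.
Proof.
move=> /is_derive_Reals H hd Hq.
destruct (Req_dec l s) as [e|ne]; first by [].
have ep : 0 < Rabs (l - s) by apply: Rabs_pos_lt; lra.
have [del Hdel] := H _ ep.
set h := Rmin del d / 2.
have hm : 0 < Rmin del d by apply: Rmin_pos; [apply: cond_pos | lra].
have hp : 0 < h by rewrite /h; lra.
have hlt : h < Rmin del d by rewrite /h; lra.
have h1 : h < del by apply: Rlt_le_trans hlt (Rmin_l _ _).
have h2 : h < d by apply: Rlt_le_trans hlt (Rmin_r _ _).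
have := Hdel h ltac:(lra) ltac:(rewrite Rabs_pos_eq; lra).
rewrite Hq; last lra.
replace (h * s / h) with s by (field; lra).
rewrite Rabs_minus_sym. lra.
Qed.
Definition Tm n th := th * INR (2 * n)%N / (2 * PI).
Definition idx n (k : Z) : nat := Z.to_nat (Z.modulo k (Z.of_nat (2 * n)%N)).
Definition seg n (P : nat -> 'I_n * 'I_n) (k : Z) (f : R) : R * R :=
  ((1 - f) * center (P (idx n k)).1 + f * center (P (idx n k).+1).1,
   (1 - f) * center (P (idx n k)).2 + f * center (P (idx n k).+1).2).

Lemma gp_eq n (P : nat -> 'I_n * 'I_n) th :
  grid_param P th = seg P (Int_part (Tm n th)) (Tm n th - IZR (Int_part (Tm n th))).
Proof. reflexivity. Qed.

Lemma P_mod n (P : nat -> 'I_n * 'I_n) : (0 < n)%N -> (forall i, P (i + 2 * n)%N = P i) ->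
  forall a b : nat, Z.modulo (Z.of_nat a) (Z.of_nat (2 * n)%N) = Z.modulo (Z.of_nat b) (Z.of_nat (2 * n)%N) ->
  P a = P b.
Proof.
move=> n0 Hp.
have Hq : forall r q, P (r + (2 * n) * q)%N = P r.
  move=> r; elim=> [|q IH]; first by rewrite muln0 addn0.
  have -> : (r + 2 * n * q.+1 = (r + 2 * n * q) + 2 * n)%N by lia.
  by rewrite Hp.
have Hm : forall a, P a = P (Z.to_nat (Z.modulo (Z.of_nat a) (Z.of_nat (2 * n)%N))).
  move=> a. rewrite -Nat2Z.inj_mod Nat2Z.id.
  have e := Nat.div_mod_eq a (2 * n)%N.
  rewrite {1}e.
  have -> : (2 * n * (a / (2 * n)) + a mod (2 * n))%coq_nat = (a mod (2 * n) + (2 * n) * (a / (2*n)))%N by lia.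
  by rewrite Hq.
move=> a b e. by rewrite Hm e -Hm.
Qed.

Lemma idx_add n (P : nat -> 'I_n * 'I_n) : (0 < n)%N -> (forall i, P (i + 2 * n)%N = P i) ->
  forall k (j : nat), P (idx n k + j)%N = P (idx n (k + Z.of_nat j)).
Proof.
move=> n0 Hp k j. apply: (P_mod n0 Hp).
rewrite /idx.
have Mp : (0 < Z.of_nat (2 * n)%N)%Z by lia.
have [h1 h2] := Z.mod_pos_bound k _ Mp.
have [h3 h4] := Z.mod_pos_bound (k + Z.of_nat j) _ Mp.
rewrite Nat2Z.inj_add !Z2Nat.id //.
rewrite Zplus_mod_idemp_l. by rewrite Z.mod_mod; lia.
Qed.

Lemma gp_periodic n (P : nat -> 'I_n * 'I_n) th : grid_param P (th + 2 * PI) = grid_param P th.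
Proof.
rewrite !gp_eq.
have PI0 := PI_RGT_0.
have e : Tm n (th + 2 * PI) = Tm n th + IZR (Z.of_nat (2 * n)%N).
  rewrite /Tm -INR_IZR_INZ. field. lra.
have e2 : Int_part (Tm n th + IZR (Z.of_nat (2 * n)%N)) = (Int_part (Tm n th) + Z.of_nat (2 * n)%N)%Z.
  apply: Ipart_eq. rewrite plus_IZR. have := Ipart_bnd (Tm n th). lra.
rewrite e e2 plus_IZR /seg.
have -> : idx n (Int_part (Tm n th) + Z.of_nat (2 * n)%N) = idx n (Int_part (Tm n th)).
  rewrite /idx. f_equal.
  have -> : (Int_part (Tm n th) + Z.of_nat (2 * n)%N = Int_part (Tm n th) + 1 * Z.of_nat (2 * n)%N)%Z by lia.
  by rewrite Z_mod_plus_full.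
by f_equal; f_equal; ring.
Qed.

Lemma pair_neq n (a b : 'I_n * 'I_n) : a <> b ->
  center a.1 <> center b.1 \/ center a.2 <> center b.2.
Proof.
case: a b => [a1 a2] [b1 b2] /= ne.
case: (Req_dec (center a1) (center b1)) => e1; last by left.
right=> e2; apply: ne. by rewrite (center_inj e1) (center_inj e2).
Qed.

Lemma alt n (P : nat -> 'I_n * 'I_n) : is_immersed_grid P -> forall i,
  ((P i).2 = (P i.+1).2 /\ (P i.+1).1 = (P i.+2).1) \/
  ((P i).1 = (P i.+1).1 /\ (P i.+1).2 = (P i.+2).2).
Proof.
move=> [_ [_ [Ha _]]] i.
case: (Nat.Even_or_Odd i) => [[j ->]|[j ->]].
  left. have := Ha j. have -> : (2 * j)%coq_nat = (2 * j)%N by lia. by [].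
right. have [h1 _] := Ha j.+1. have [_ h2] := Ha j.
have -> : (2 * j + 1)%coq_nat = (2 * j).+1 by lia.
have e : (2 * j.+1)%N = (2 * j).+2 by lia.
rewrite e in h1. by split.
Qed.

Lemma seg_same n (P : nat -> 'I_n * 'I_n) k f1 f2 : is_immersed_grid P ->
  seg P k f1 = seg P k f2 -> f1 = f2.
Proof.
move=> Hi. have [_ [_ [_ Hn]]] := Hi.
rewrite /seg => [[e1 e2]].
case: (pair_neq (Hn (idx n k))) => ne.
  apply: (Rmult_eq_reg_r (center (P (idx n k).+1).1 - center (P (idx n k)).1)); last lra.
  lra.
apply: (Rmult_eq_reg_r (center (P (idx n k).+1).2 - center (P (idx n k)).2)); last lra.
lra.
Qed.

Lemma seg_next n (P : nat -> 'I_n * 'I_n) k f1 f2 : is_immersed_grid P -> (0 < n)%N ->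
  f1 < 1 -> seg P k f1 = seg P (k + 1) f2 -> False.
Proof.
move=> Hi n0 hf. have [Hp [_ [_ Hn]]] := Hi.
have E1 : P (idx n (k + 1)) = P (idx n k).+1.
  by rewrite -addn1 (idx_add n0 Hp).
have E2 : P (idx n (k + 1)).+1 = P (idx n k).+2.
  rewrite -addn1 (idx_add n0 Hp) -addn2 (idx_add n0 Hp).
  by rewrite -Z.add_assoc.
rewrite /seg E1 E2 => [[e1 e2]].
have ne := Hn (idx n k).
case: (alt Hi (idx n k)) => [[a1 a2]|[a1 a2]].
  have ne1 : center (P (idx n k)).1 <> center (P (idx n k).+1).1.
    move=> e. apply: ne. case: (P (idx n k)) (P (idx n k).+1) a1 e => [x1 x2] [y1 y2] /= -> e.
    by rewrite (center_inj e).
  rewrite -a2 in e1. apply: ne1.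
  apply: (Rmult_eq_reg_l (1 - f1)); lra.
have ne1 : center (P (idx n k)).2 <> center (P (idx n k).+1).2.
  move=> e. apply: ne. case: (P (idx n k)) (P (idx n k).+1) a1 e => [x1 x2] [y1 y2] /= -> e.
  by rewrite (center_inj e).
rewrite -a2 in e2. apply: ne1.
apply: (Rmult_eq_reg_l (1 - f1)); lra.
Qed.

Lemma gp_locinj n (P : nat -> 'I_n * 'I_n) : is_immersed_grid P -> (0 < n)%N ->
  forall th th1 th2, Rabs (th1 - th) < PI / INR (2 * n)%N -> Rabs (th2 - th) < PI / INR (2 * n)%N ->
  grid_param P th1 = grid_param P th2 -> th1 = th2.
Proof.
move=> Hi n0 th th1 th2 h1 h2.
have PI0 := PI_RGT_0.
have M0 : 0 < INR (2 * n)%N by apply: lt_0_INR; lia.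
set M := INR (2 * n)%N in M0 h1 h2.
have h12 : Rabs (th1 - th2) < 2 * (PI / M).
  move: h1 h2. set e := PI / M. move=> h1 h2.
  rewrite Rabs_minus_sym in h2. have := Rabs_triang (th1 - th) (th - th2).
  have -> : th1 - th + (th - th2) = th1 - th2 by ring. lra.
have ht : Rabs (Tm n th1 - Tm n th2) < 1.
  have -> : Tm n th1 - Tm n th2 = (th1 - th2) * (M / (2 * PI)) by rewrite /Tm /M; field; lra.
  rewrite Rabs_mult (Rabs_pos_eq (M / (2 * PI))); last first.
    apply: Rlt_le. apply: Rdiv_lt_0_compat; lra.
  have -> : 1 = 2 * (PI / M) * (M / (2 * PI)) by field; lra.
  apply: Rmult_lt_compat_r => //. apply: Rdiv_lt_0_compat; lra.
rewrite !gp_eq.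
set t1 := Tm n th1 in ht *. set t2 := Tm n th2 in ht *.
have b1 := Ipart_bnd t1. have b2 := Ipart_bnd t2.
set k1 := Int_part t1 in b1 *. set k2 := Int_part t2 in b2 *.
move=> E.
have d1 : (k1 - k2 < 2)%Z.
  apply: lt_IZR. rewrite minus_IZR. case: (Rabs_def2 _ _ ht) => ? ?. lra.
have d2 : (k2 - k1 < 2)%Z.
  apply: lt_IZR. rewrite minus_IZR. case: (Rabs_def2 _ _ ht) => ? ?. lra.
have tt : t1 = t2 -> th1 = th2.
  rewrite /t1 /t2 /Tm => e.
  rewrite -/M in e.
  replace th1 with (th1 * M / (2 * PI) * (2 * PI) / M) by (field; lra).
  rewrite e. field; lra.
case: (Z.lt_total k1 k2) => [lt|[eq|gt]].
- have e : k2 = (k1 + 1)%Z by lia.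
  rewrite e in E. case: (seg_next Hi n0 _ E). lra.
- rewrite eq in E. have := seg_same Hi E. move=> ef. apply: tt.
  lra.
- have e : k1 = (k2 + 1)%Z by lia.
  rewrite e in E. symmetry in E. case: (seg_next Hi n0 _ E). lra.
Qed.

Lemma gp_deriv_nz n (P : nat -> 'I_n * 'I_n) th : is_immersed_grid P -> (0 < n)%N ->
  ex_derive (fun t => fst (grid_param P t)) th ->
  ex_derive (fun t => snd (grid_param P t)) th ->
  Derive (fun t => fst (grid_param P t)) th <> 0 \/
  Derive (fun t => snd (grid_param P t)) th <> 0.
Proof.
move=> Hi n0 d1 d2.
have PI0 := PI_RGT_0.
have M0 : 0 < INR (2 * n)%N by apply: lt_0_INR; lia.
set M := INR (2 * n)%N in M0.
set c := M / (2 * PI).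
have c0 : 0 < c by apply: Rdiv_lt_0_compat; lra.
set t := Tm n th. have b := Ipart_bnd t. set k := Int_part t in b.
set f0 := t - IZR k.
set A := P (idx n k). set B := P (idx n k).+1.
have key : forall h, 0 < h < (1 - f0) / c ->
   grid_param P (th + h) = seg P k (f0 + h * c).
  move=> h hh. rewrite gp_eq.
  have e : Tm n (th + h) = t + h * c by rewrite /t /Tm /c /M; field; lra.
  have hc : h * c < 1 - f0.
    have := Rmult_lt_compat_r c _ _ c0 (proj2 hh). have -> : (1 - f0) / c * c = 1 - f0 by field; lra. by [].
  have ek : Int_part (Tm n (th + h)) = k.
    apply: Ipart_eq. rewrite e. rewrite /f0 in hc. nra.
  rewrite ek e /f0. f_equal. ring.
have dpos : 0 < (1 - f0) / c by apply: Rdiv_lt_0_compat; rewrite /f0; lra.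
have e0 : grid_param P th = seg P k f0 by rewrite gp_eq.
have D1 : Derive (fun t => fst (grid_param P t)) th = c * (center B.1 - center A.1).
  apply: (deriv_right (Derive_correct _ _ d1) dpos) => h hh.
  rewrite key // e0 /seg. rewrite -/A -/B /=. ring.
have D2 : Derive (fun t => snd (grid_param P t)) th = c * (center B.2 - center A.2).
  apply: (deriv_right (Derive_correct _ _ d2) dpos) => h hh.
  rewrite key // e0 /seg. rewrite -/A -/B /=. ring.
have [_ [_ [_ Hn]]] := Hi.
rewrite D1 D2. case: (pair_neq (Hn (idx n k))) => ne.
  left. move=> /Rmult_integral [e|e]; first lra. apply: ne; rewrite -/A -/B; lra.
right. move=> /Rmult_integral [e|e]; first lra. apply: ne; rewrite -/A -/B; lra.
Qed.

Section TM.
Variables (n : nat) (cyc : nat -> pt n).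
Let ZX := zx_vert cyc.
Let WY := wy_vert cyc.

Lemma ds_w s u : d_s (torus_map cyc) s u c_w = 0.
Proof. rewrite /d_s. change (Derive (fun _ : R => fst (grid_param WY u)) s = 0). apply: Derive_const. Qed.
Lemma ds_y s u : d_s (torus_map cyc) s u c_y = 0.
Proof. rewrite /d_s. change (Derive (fun _ : R => snd (grid_param WY u)) s = 0). apply: Derive_const. Qed.
Lemma du_x s u : d_u (torus_map cyc) s u c_x = 0.
Proof. rewrite /d_u. change (Derive (fun _ : R => snd (grid_param ZX s)) u = 0). apply: Derive_const. Qed.
Lemma du_z s u : d_u (torus_map cyc) s u c_z = 0.
Proof. rewrite /d_u. change (Derive (fun _ : R => fst (grid_param ZX s)) u = 0). apply: Derive_const. Qed.
End TM.

Theorem theorem5p1 (n : nat) (M : 'I_4 -> {set pt n}) (cyc : nat -> pt n) :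
  lagrangian_hypercube M cyc ->
  immersed_lagrangian_torus (torus_map cyc) /\
  (forall s : R, (torus_map cyc s R0 c_z, torus_map cyc s R0 c_x)
                 = grid_param (zx_vert cyc) s) /\
  (forall u : R, (torus_map cyc R0 u c_w, torus_map cyc R0 u c_y)
                 = grid_param (wy_vert cyc) u).
Proof.
move=> [_ [_ [[Hzx _] [[Hwy _] _]]]].
have n0 : (0 < n)%N by apply: (leq_ltn_trans (leq0n _) (ltn_ord (cyc 0%N c_w))).
split; last first.
  split=> s; by rewrite [RHS]surjective_pairing.
split.
  move=> s u c; rewrite /torus_map !gp_periodic; by split.
split.
  move=> s u. exists (PI / INR (2 * n)%N). split.
    apply: Rdiv_lt_0_compat; [exact: PI_RGT_0| apply: lt_0_INR; lia].
  move=> s1 u1 s2 u2 hs1 hu1 hs2 hu2 E.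
  have Ew : fst (grid_param (wy_vert cyc) u1) = fst (grid_param (wy_vert cyc) u2) := E c_w.
  have Ey : snd (grid_param (wy_vert cyc) u1) = snd (grid_param (wy_vert cyc) u2) := E c_y.
  have Ex : snd (grid_param (zx_vert cyc) s1) = snd (grid_param (zx_vert cyc) s2) := E c_x.
  have Ez : fst (grid_param (zx_vert cyc) s1) = fst (grid_param (zx_vert cyc) s2) := E c_z.
  split.
    apply: (gp_locinj Hzx n0 hs1 hs2).
    rewrite (surjective_pairing (grid_param _ s1)) (surjective_pairing (grid_param _ s2)).
    by rewrite Ex Ez.
  apply: (gp_locinj Hwy n0 hu1 hu2).
  rewrite (surjective_pairing (grid_param _ u1)) (surjective_pairing (grid_param _ u2)).
  by rewrite Ew Ey.
split.
  move=> s u D a b Hab.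
  have [Dx _] := D c_x. have [Dz _] := D c_z.
  have [_ Dw] := D c_w. have [_ Dy] := D c_y.
  have hx := Hab c_x. have hz := Hab c_z. have hw := Hab c_w. have hy := Hab c_y.
  rewrite du_x in hx. rewrite du_z in hz. rewrite ds_w in hw. rewrite ds_y in hy.
  change (ex_derive (fun s' => snd (grid_param (zx_vert cyc) s')) s) in Dx.
  change (ex_derive (fun s' => fst (grid_param (zx_vert cyc) s')) s) in Dz.
  change (ex_derive (fun s' => fst (grid_param (wy_vert cyc) s')) u) in Dw.
  change (ex_derive (fun s' => snd (grid_param (wy_vert cyc) s')) u) in Dy.
  change (a * Derive (fun s' => snd (grid_param (zx_vert cyc) s')) s + b * 0 = 0) in hx.
  change (a * Derive (fun s' => fst (grid_param (zx_vert cyc) s')) s + b * 0 = 0) in hz.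
  change (a * 0 + b * Derive (fun s' => fst (grid_param (wy_vert cyc) s')) u = 0) in hw.
  change (a * 0 + b * Derive (fun s' => snd (grid_param (wy_vert cyc) s')) u = 0) in hy.
  split.
    case: (gp_deriv_nz Hzx n0 Dz Dx) => ne.
      have : a * Derive (fun s' => fst (grid_param (zx_vert cyc) s')) s = 0 by lra.
      by move=> /Rmult_integral [//|].
    have : a * Derive (fun s' => snd (grid_param (zx_vert cyc) s')) s = 0 by lra.
    by move=> /Rmult_integral [//|].
  case: (gp_deriv_nz Hwy n0 Dw Dy) => ne.
    have : b * Derive (fun s' => fst (grid_param (wy_vert cyc) s')) u = 0 by lra.
    by move=> /Rmult_integral [//|].
  have : b * Derive (fun s' => snd (grid_param (wy_vert cyc) s')) u = 0 by lra.
  by move=> /Rmult_integral [//|].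
move=> s u _. rewrite /omega ds_w ds_y du_x du_z. ring.
Qed.
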